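(* For each $\gamma\in\mathbb{R}$ let $\hat g_{-,\gamma}$ be any minimizer of $\hat h_{-,\gamma}$ over $\mathcal{F}$. Then: (1) $\hat h_{-,\gamma}(\hat g_{-,\gamma})$ is monotonically increasing in $\gamma$; (2) $\hat e_{\text{orig}}(\hat g_{-,\gamma})$ is monotonically decreasing in $\gamma$; (3) for fixed $\epsilon_{\text{abs}}>0$, the quantity $\frac{\hat h_{-,\gamma}(\hat g_{-,\gamma})}{\epsilon_{\text{abs}}}-\gamma$ is monotonically decreasing in $\gamma$ over the range where $\hat e_{\text{orig}}(\hat g_{-,\gamma})\le\epsilon_{\text{abs}}$, and monotonically increasing in $\gamma$ otherwise.
   Context: Setting: $\mathcal{F}$ a set of prediction models, $L\ge0$ a loss, and a fixed observed sample $(\mathbf{y}_{[i]},\mathbf{X}_{1[i]},\mathbf{X}_{2[i]})$, $i=1,\dots,n$, $n\ge2$. $\hat e_{\text{orig}}(f)=\frac1n\sum_iL\{f,(\mathbf{y}_{[i]},\mathbf{X}_{1[i]},\mathbf{X}_{2[i]})\}$; $\hat e_{\text{switch}}(f)=\frac1{n(n-1)}\sum_i\sum_{j\ne i}L\{f,(\mathbf{y}_{[j]},\mathbf{X}_{1[i]},\mathbf{X}_{2[j]})\}$. For $\gamma\in\mathbb{R}$, $\hat h_{-,\gamma}(f):=\gamma\hat e_{\text{orig}}(f)+\hat e_{\text{switch}}(f)$. Standing assumptions: $\min_{f\in\mathcal{F}}\hat e_{\text{orig}}(f)>0$ and minimizers of $\hat h_{-,\gamma}$ over $\mathcal{F}$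 exist for every $\gamma$. *)

(* Defs.v *)
From mathcomp Require Import all_boot all_order all_algebra.
From mathcomp Require Import reals.
Set Implicit Arguments. Unset Strict Implicit. Unset Printing Implicit Defensive.
Import Order.TTheory GRing.Theory Num.Theory.
Local Open Scope ring_scope.

Section Risks.
Variables (R : realType) (M Y T1 T2 : Type).
Variable (L : M -> Y * T1 * T2 -> R).
Variables (n : nat) (y : 'I_n -> Y) (X1 : 'I_n -> T1) (X2 : 'I_n -> T2).

Definition e_orig (f : M) : R :=
  (n%:R)^-1 * \sum_(i < n) L f (y i, X1 i, X2 i).

Definition e_switch (f : M) : R :=
  ((n * n.-1)%N%:R)^-1 *
    \sum_(i < n) \sum_(j < n | j != i) L f (y j, X1 i, X2 j).

Definition h_minus (gamma : R) (f : M) : R :=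
  gamma * e_orig f + e_switch f.

End Risks.

(* Main.v *)
Require Import Defs.
From mathcomp Require Import all_boot all_order all_algebra.
From mathcomp Require Import reals.
From mathcomp Require Import lra.
Import Order.TTheory GRing.Theory Num.Theory.
Local Open Scope ring_scope.

Theorem lemma15 (R : realType) (M Y T1 T2 : Type) (F : M -> Prop)
  (L : M -> Y * T1 * T2 -> R) (n : nat)
  (y : 'I_n -> Y) (X1 : 'I_n -> T1) (X2 : 'I_n -> T2)
  (hn : (2 <= n)%N)
  (hL : forall f z, 0 <= L f z)
  (hmin : exists f0, F f0 /\ (forall f, F f -> e_orig L y X1 X2 f0 <= e_orig L y X1 X2 f)
                      /\ 0 < e_orig L y X1 X2 f0)
  (g : R -> M)
  (hgF : forall gamma, F (g gamma))
  (hg : forall gamma f, F f ->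
          h_minus L y X1 X2 gamma (g gamma) <= h_minus L y X1 X2 gamma f) :
  (* (1) *)
  (forall g1 g2, g1 <= g2 ->
     h_minus L y X1 X2 g1 (g g1) <= h_minus L y X1 X2 g2 (g g2)) /\
  (* (2) *)
  (forall g1 g2, g1 <= g2 ->
     e_orig L y X1 X2 (g g2) <= e_orig L y X1 X2 (g g1)) /\
  (* (3) *)
  (forall eps : R, 0 < eps ->
     (forall g1 g2, g1 <= g2 ->
        e_orig L y X1 X2 (g g1) <= eps -> e_orig L y X1 X2 (g g2) <= eps ->
        h_minus L y X1 X2 g2 (g g2) / eps - g2
          <= h_minus L y X1 X2 g1 (g g1) / eps - g1) /\
     (forall g1 g2, g1 <= g2 ->
        eps < e_orig L y X1 X2 (g g1) -> eps < e_orig L y X1 X2 (g g2) ->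
        h_minus L y X1 X2 g1 (g g1) / eps - g1
          <= h_minus L y X1 X2 g2 (g g2) / eps - g2)).
Proof.
have e0 : forall f, 0 <= e_orig L y X1 X2 f.
  move=> f; rewrite /e_orig; apply: mulr_ge0; first by rewrite invr_ge0 ler0n.
  by apply: sumr_ge0 => i _; apply: hL.
have key : forall g1 g2,
  g1 * e_orig L y X1 X2 (g g1) + e_switch L y X1 X2 (g g1)
    <= g1 * e_orig L y X1 X2 (g g2) + e_switch L y X1 X2 (g g2).
  by move=> g1 g2; have := hg g1 (g g2) (hgF g2); rewrite /h_minus.
rewrite /h_minus; split; last split.
- move=> g1 g2 le12.
  have := key g1 g2; have := e0 (g g2).
  set e2 := e_orig _ _ _ _ (g g2) => He2 K.
  apply: (le_trans K); rewrite lerD2r; exact: ler_wpM2r.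
- move=> g1 g2; rewrite le_eqVlt => /orP [/eqP -> //|lt12].
  have := key g1 g2; have := key g2 g1.
  set e1 := e_orig _ _ _ _ (g g1); set e2 := e_orig _ _ _ _ (g g2).
  set s1 := e_switch _ _ _ _ (g g1); set s2 := e_switch _ _ _ _ (g g2).
  move=> K1 K2.
  have H : (g2 - g1) * (e2 - e1) <= 0 by nra.
  rewrite -subr_le0; rewrite pmulr_rle0 in H; first by [].
  by rewrite subr_gt0.
- move=> eps eps0.
  have E : forall a b : R, a / eps - b = (a - b * eps) / eps.
    by move=> a b; rewrite mulrBl mulfK ?gt_eqF.
  split => g1 g2 le12.
  + have := key g2 g1.
    set e1 := e_orig _ _ _ _ (g g1); set e2 := e_orig _ _ _ _ (g g2).
    set s1 := e_switch _ _ _ _ (g g1); set s2 := e_switch _ _ _ _ (g g2).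
    move=> K h1 h2.
    rewrite !E ler_pM2r ?invr_gt0 //.
    nra.
  + have := key g1 g2.
    set e1 := e_orig _ _ _ _ (g g1); set e2 := e_orig _ _ _ _ (g g2).
    set s1 := e_switch _ _ _ _ (g g1); set s2 := e_switch _ _ _ _ (g g2).
    move=> K h1 h2.
    rewrite !E ler_pM2r ?invr_gt0 //.
    nra.
Qed.
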